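(* Let $G$ be a connected graph, $v_{\mathsf{init}}\in V(G)$, and $\mathsf{VC}$ a vertex cover of $G$ with $v_{\mathsf{init}}\in\mathsf{VC}$. Let $\widehat{E}$ be a multiset with elements from $E(G)$ such that $\mathsf{Graph}(\widehat{E})$ is connected, $v_{\mathsf{init}}\in V(\mathsf{Graph}(\widehat{E}))$, every vertex of $\mathsf{Graph}(\widehat{E})$ has even degree, and every edge appears at most twice in $\widehat{E}$. Then there exist a sub-multiset $\mathsf{CC}\subseteq\widehat{E}$ and a multiset $\mathcal{C}$ of cycles in $\mathsf{Graph}(\widehat{E})$ such that: (1) $\mathsf{Graph}(\mathsf{CC})$ is a $\overline{G}$-submultigraph, i.e., for every equivalence class $u^*\in\mathsf{EQ}$, $|V(\mathsf{Graph}(\mathsf{CC}))\cap u^*|\le\mathsf{NumVer}(u^* )$; (2) $\mathsf{Graph}(\mathsf{CC})$ is connected, $v_{\mathsf{init}}\in V(\mathsf{Graph}(\mathsf{CC}))$, and every vertex of $\mathsf{Graph}(\mathsf{CC})$ has even degree in it; (3) $V(\mathsf{Graph}(\mathsf{CC}))\cap\mathsf{VC}=V(\mathsf{Graph}(\widehat{E}))\cap\mathsf{VC}$; (4) at most $2|\mathsf{VC}|^2$ cycles in $\mathcal{C}$ have length other than $4$; (5) the cycles in $\mathcal{C}$ of length other than $4$ are simple; (6) the multiset sum $\mathsf{CC}\uplus\biguplus_{C\in\mathcal{C}}E(C)$ equals $\widehat{E}$.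
   Context: For a multiset $\widehat{E}$ of edges, $\mathsf{Graph}(\widehat{E})$ is the multigraph whose vertices are the endpoints of edges of $\widehat{E}$ and whose edge multiset is $\widehat{E}$; degrees count multiplicity. Paths/cycles: a path is a sequence $(v_0,\dots,v_\ell)$ with consecutive vertices adjacent (repetitions allowed), length $\ell$; a cycle has $v_0=v_\ell$; it is simple if $v_0,\dots,v_{\ell-1}$ are distinct; $E(C)$ is the multiset of traversed edges. Let $\mathsf{IND}=V(G)\setminus\mathsf{VC}$. Two vertices $u,v\in\mathsf{IND}$ are equivalent if $N_G(u)=N_G(v)$; $\mathsf{EQ}$ is the set of equivalence classes. The equivalence graph $G^*$ has vertex set $\mathsf{VC}\cup\mathsf{EQ}$ (classes as single vertices), with edges $\{u,v\}\in E(G)$ for $u,v\in\mathsf{VC}$, and edges $\{u^*,v\}$ for $u^*\in\mathsf{EQ}$, $v\in\mathsf{VC}$ whenever some $u\in u^*$ has $\{u,v\}\in E(G)$. For $u^*\in\mathsf{EQ}$, $\mathsf{NumVer}(u^* )=\min\{|u^*|,\,2^{|N_{G^*}(u^* )|}+|\mathsf{VC}|^2\}$. *)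

(* Defs.v *)
From mathcomp Require Import all_boot.
Set Implicit Arguments. Unset Strict Implicit. Unset Printing Implicit Defensive.

(* A simple graph G on a finite vertex type T is a symmetric irreflexive
   relation e.
   A multiset of edges is a sequence of edges, considered up to permutation
   (multiplicities = count_mem). *)

Section Defs.
Variable T : finType.

Definition edge_of (e : rel T) (f : {set T}) : bool :=
  [exists x, exists y, e x y && (f == [set x; y])].

Definition graph_connected (e : rel T) : Prop := forall x y : T, connect e x y.

Definition vertex_cover (e : rel T) (VC : {set T}) : Prop :=
  forall x y, e x y -> (x \in VC) || (y \in VC).

Definition gV (s : seq {set T}) : {set T} := \bigcup_(f <- s) f.
Definition gadj (s : seq {set T}) : rel T :=
  fun x y => (x != y) && ([set x; y] \in s).
Definition gdeg (s : seq {set T}) (v : T) : nat := count (fun f : {set T} => v \in f) s.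
Definition g_connected (s : seq {set T}) : Prop :=
  forall x y, x \in gV s -> y \in gV s -> connect (gadj s) x y.
Definition g_even (s : seq {set T}) : Prop :=
  forall v, v \in gV s -> ~~ odd (gdeg s v).
Definition submultiset (s1 s2 : seq {set T}) : Prop :=
  forall f, count_mem f s1 <= count_mem f s2.

(* Paths/cycles given as vertex sequences (v_0, ..., v_l) *)
Definition clength (c : seq T) : nat := (size c).-1.
Definition is_cycle_in (s : seq {set T}) (c : seq T) : bool :=
  if c is v0 :: r then path (gadj s) v0 r && (last v0 r == v0) else false.
Definition simple_cycle (c : seq T) : bool :=
  if c is v0 :: r then uniq (belast v0 r) else false.
Definition cycle_edges (c : seq T) : seq {set T} :=
  if c is v0 :: r then pairmap (fun x y => [set x; y]) v0 r else [::].

Definition nbhd (e : rel T) (u : T) : {set T} := [set v | e u v].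
Definition eq_class (e : rel T) (VC : {set T}) (u : T) : {set T} :=
  [set w in ~: VC | nbhd e w == nbhd e u].
Definition EQ (e : rel T) (VC : {set T}) : {set {set T}} :=
  [set eq_class e VC u | u in ~: VC].
Definition nbhd_star (e : rel T) (VC : {set T}) (U : {set T}) : {set T} :=
  [set v in VC | [exists u in U, e u v]].
Definition NumVer (e : rel T) (VC : {set T}) (U : {set T}) : nat :=
  minn #|U| (2 ^ #|nbhd_star e VC U| + #|VC| ^ 2).

End Defs.

(* Main.v *)
Require Import Defs.
From mathcomp Require Import all_boot.
From Stdlib Require Import Classical.
Set Implicit Arguments. Unset Strict Implicit. Unset Printing Implicit Defensive.

Section Proof.
Variables (T : finType) (e : rel T)
  (e_sym : symmetric e) (e_irr : irreflexive e)
  (G_conn : graph_connected e)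
  (v_init : T) (VC : {set T})
  (VC_cover : vertex_cover e VC) (v_init_VC : v_init \in VC)
  (Ehat : seq {set T})
  (Ehat_edges : all (edge_of e) Ehat)
  (Ehat_conn : g_connected Ehat)
  (v_init_Ehat : v_init \in gV Ehat)
  (Ehat_even : g_even Ehat).

Lemma mem_gV (s : seq {set T}) x : (x \in gV s) = has (fun f : {set T} => x \in f) s.
Proof.
rewrite /gV; elim: s => [|f s IH]; first by rewrite big_nil in_set0.
by rewrite big_cons in_setU IH.
Qed.

Lemma gadj_sym (s : seq {set T}) : symmetric (gadj s).
Proof. by move=> x y; rewrite /gadj eq_sym setUC. Qed.

Lemma gadj_gV (s : seq {set T}) x y : gadj s x y -> x \in gV s.
Proof.
case/andP=> _ H; rewrite mem_gV; apply/hasP; exists [set x; y] => //.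
by rewrite set21.
Qed.

Lemma incident (f : {set T}) u : f \in Ehat -> u \in f ->
  exists v, [/\ u != v, e u v & f = [set u; v]].
Proof.
move=> fE uf; have /existsP[x /existsP[y /andP[exy /eqP fxy]]] :=
  allP Ehat_edges f fE.
move: uf; rewrite fxy in_set2 => /orP[/eqP->|/eqP->].
  by exists y; split => //; apply/negP => /eqP xy; move: exy; rewrite xy e_irr.
exists x; split; last by rewrite setUC.
  by apply/negP => /eqP xy; move: exy; rewrite xy e_irr.
by rewrite e_sym.
Qed.

Lemma gadjE x y : gadj Ehat x y -> e x y.
Proof.
case/andP=> xy fE.
have [v [_ exv /setP H]] := incident fE (set21 x y).
have := H y; rewrite !in_set2 eqxx orbT eq_sym (negbTE xy) /=.
by move/esym/eqP => ->.
Qed.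

Lemma gdeg0 (s : seq {set T}) v : v \notin gV s -> gdeg s v = 0.
Proof.
rewrite mem_gV /gdeg => H; apply/eqP; rewrite -leqn0 leqNgt -has_count.
by [].
Qed.

Definition kw (a b : T) : option T :=
  [pick w | (w \notin VC) && gadj Ehat a w && gadj Ehat w b].
Definition Kopt : {set option T} := [set kw p.1 p.2 | p in setX VC VC].
Definition K : {set T} := [set w | Some w \in Kopt].
Definition Free (w : T) : bool := (w \notin VC) && (w \notin K).

Lemma card_K : #|K| <= #|VC| ^ 2.
Proof.
have <- : #|[set Some w | w in K]| = #|K| by apply: card_imset; exact: Some_inj.
apply: (leq_trans (subset_leq_card (_ : _ \subset Kopt))).
  by apply/subsetP => o /imsetP[w]; rewrite inE => H ->.
by apply: leq_trans (leq_imset_card _ _) _; rewrite cardsX.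
Qed.

Lemma kwP a b w : a \in VC -> b \in VC -> w \notin VC -> gadj Ehat a w -> gadj Ehat w b ->
  exists k, [/\ k \in K, k \notin VC, gadj Ehat a k & gadj Ehat k b].
Proof.
move=> aV bV wV aw wb.
have : Some (kw a b) = Some (kw a b) by [].
rewrite {2}/kw; case: pickP => [k /andP[/andP[kV ak] kb] [Hk]|H _].
  exists k; split => //; rewrite inE; apply/imsetP; exists (a, b).
    by rewrite in_setX aV bV.
  by rewrite /= Hk.
by move: (H w); rewrite wV aw wb.
Qed.


Definition cyc_ok (c : seq T) := is_cycle_in Ehat c && (clength c == 4).
Definition Pinv (s : seq {set T}) (Cs : seq (seq T)) :=
  [/\ perm_eq (s ++ flatten (map (@cycle_edges T) Cs)) Ehat, all cyc_ok Cs,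
   (forall f : {set T}, (forall w, w \in f -> ~~ Free w) -> count_mem f s = count_mem f Ehat)
   & (forall v, ~~ odd (gdeg s v))].
Definition supp (s : seq {set T}) u : {set T} := [set v | gadj s u v].

Lemma two_rem (s : seq {set T}) x y : x \in s -> (x == y) < count_mem y s ->
  exists s1, perm_eq s (x :: y :: s1).
Proof.
move=> xs c; have P1 := perm_to_rem xs.
have := (permP P1) (pred1 y); rewrite /= => Hc.
have : y \in rem x s.
  rewrite -has_pred1 has_count; move: c; rewrite Hc.
  by case: (x == y) => /=; rewrite ?add1n ?add0n.
move/perm_to_rem => P2; exists (rem y (rem x s)).
by apply: (perm_trans P1); rewrite perm_cons.
Qed.

Lemma half (s : seq {set T}) u a b : gadj s u a -> gadj s u b ->
  (a != b \/ 1 < count_mem [set u; a] s) ->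
  exists s1, perm_eq s ([set a; u] :: [set u; b] :: s1).
Proof.
move=> /andP[ua uas] /andP[ub ubs] H; apply: two_rem; first by rewrite setUC.
have y1 : 0 < count_mem [set u; b] s by rewrite -has_count has_pred1.
case: eqP => [Exy|] //=; case: H => [ab|//]; last by rewrite -Exy setUC.
exfalso; have : b \in [set a; u] by rewrite Exy set22.
by rewrite in_set2 eq_sym (negbTE ab) eq_sym (negbTE ub).
Qed.

Lemma parity (s : seq {set T}) u a : (forall f, f \in s -> f \in Ehat) ->
  (forall b, gadj s u b -> b = a) -> gadj s u a -> ~~ odd (gdeg s u) ->
  1 < count_mem [set u; a] s.
Proof.
move=> sE Hb ua ev.
have E : gdeg s u = count_mem [set u; a] s.
  rewrite /gdeg; apply: eq_in_count => f fs /=.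
  apply/idP/idP => [uf|/eqP->]; last by rewrite set21.
  have [v [uv _ fe]] := incident (sE f fs) uf.
  have : gadj s u v by rewrite /gadj uv -fe fs.
  by move/Hb => va; rewrite fe va eqxx.
have : 0 < count_mem [set u; a] s by rewrite -has_count has_pred1; case/andP: ua.
move: ev; rewrite E; case: (count_mem _ _) => [|[|n]] //.
Qed.


Lemma in2n (x y v : T) : x != y -> ((v \in [set x; y]) : nat) = (v == x) + (v == y).
Proof.
move=> xy; rewrite in_set2; case: (eqVneq v x) => [->|] //=.
by rewrite (negbTE xy).
Qed.

Lemma step s Cs u u' : Pinv s Cs -> u != u' -> Free u -> Free u' ->
  u \in gV s -> supp s u = supp s u' ->
  exists s' c, Pinv s' (c :: Cs) /\ size s' < size s.
Proof.
case=> Pp Pc Pf Pe uu' Fu Fu' ugv Hsupp.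
have sE f : f \in s -> f \in Ehat by move=> fs; rewrite -(perm_mem Pp) mem_cat fs.
have gE x y : gadj s x y -> gadj Ehat x y.
  by case/andP => xy xys; rewrite /gadj xy sE.
have Hs z : gadj s u z = gadj s u' z.
  by have := congr1 (fun S : {set T} => z \in S) Hsupp; rewrite !inE.
move: ugv; rewrite mem_gV => /hasP[f fs uf].
have [a [ua _ fe]] := incident (sE f fs) uf.
have ua' : gadj s u a by rewrite /gadj ua -fe fs.
have [b [ub Hab]] : exists b, gadj s u b /\ (a != b \/
    (b = a /\ 1 < count_mem [set u; a] s /\ 1 < count_mem [set u'; a] s)).
  case: (classic (exists b, gadj s u b /\ b != a)) => [[b [ub ba]]|N].
    by exists b; split => //; left; rewrite eq_sym.
  have Hb : forall b, gadj s u b -> b = a.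
    move=> b ub; apply/eqP; apply/negPn/negP => ba; apply: N; exists b; by split.
  exists a; split => //; right; split => //; split; apply: parity => //.
    by move=> b; rewrite -Hs; apply: Hb.
  by rewrite -Hs.
have [s1 P1] : exists s1, perm_eq s ([set a; u] :: [set u; b] :: s1).
  apply: half => //; case: Hab => [ab|[_ [c1 _]]]; by [left|right].
have C1 (g : {set T}) : u \notin g -> count_mem g s1 = count_mem g s.
  move=> ug; rewrite ((permP P1) (pred1 g)) /=.
  have -> : ([set a; u] == g) = false.
    by apply/negbTE; apply: contraNneq ug => <-; rewrite set22.
  have -> : ([set u; b] == g) = false.
    by apply/negbTE; apply: contraNneq ug => <-; rewrite set21.
  by [].
have G1 z : gadj s u z -> gadj s1 u' z.
  move=> uz; have u'z : gadj s u' z by rewrite -Hs.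
  have nu : u \notin [set u'; z].
    by rewrite in_set2 negb_or uu'; case/andP: uz.
  case/andP: u'z => nz zs.
  by rewrite /gadj nz -has_pred1 has_count C1 // -has_count has_pred1.
have [s2 P2] : exists s2, perm_eq s1 ([set b; u'] :: [set u'; a] :: s2).
  apply: half; try exact: G1.
  case: Hab => [ab|[ba [_ c2]]]; first by left; rewrite eq_sym.
  right; rewrite ba C1 //; rewrite in_set2 negb_or uu'; by case/andP: ua'.
have Pall : perm_eq s ([set a; u] :: [set u; b] :: [set b; u'] :: [set u'; a] :: s2).
  by apply: (perm_trans P1); rewrite !perm_cons.
have ub' : gadj s u' b by rewrite -Hs.
have ua'' : gadj s u' a by rewrite -Hs.
exists s2, [:: a; u; b; u'; a]; split; last first.
  by rewrite (perm_size Pall) /= ltnS -addn3 leq_addr.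
split.
- apply: (perm_trans _ Pp) => /=.
  rewrite -[[:: _, _, _, _ & flatten _]]/([:: [set a; u]; [set u; b]; [set b; u']; [set u'; a]] ++ flatten _).
  rewrite catA perm_cat2r.
  by rewrite perm_catC perm_sym.
- rewrite /= Pc andbT /cyc_ok /is_cycle_in /= eqxx !andbT.
  rewrite gE; last by rewrite gadj_sym.
  by rewrite !gE // gadj_sym.
- move=> g Hg; rewrite -Pf // ((permP Pall) (pred1 g)) /=.
  have nf z : Free z -> forall h : {set T}, z \in h -> (h == g) = false.
    move=> Fz h zh; apply/negbTE; apply/eqP => hg.
    by move: (Hg z); rewrite -hg zh Fz => /(_ isT).
  rewrite (nf u Fu _ (set22 a u)) (nf u Fu _ (set21 u b)).
  by rewrite (nf u' Fu' _ (set22 b u')) (nf u' Fu' _ (set21 u' a)).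
- move=> v; have := Pe v; rewrite /gdeg ((permP Pall) (fun f => v \in f)) /=.
  case/andP: ua' => ua1 _; case/andP: ub => ub1 _.
  case/andP: ub' => ub2 _; case/andP: ua'' => ua2 _.
  have h1 : a != u by rewrite eq_sym.
  have h2 : b != u' by rewrite eq_sym.
  rewrite !in2n //.
  rewrite !oddD.
  case: (v == a); case: (v == u); case: (v == b); case: (v == u'); rewrite /= ?negbK ?addbT ?addbF ?negbK; done.
Qed.


Definition terminal (s : seq {set T}) := forall u u', u != u' -> Free u -> Free u' ->
  u \in gV s -> u' \in gV s -> supp s u != supp s u'.

Lemma iter n : forall s Cs, size s <= n -> Pinv s Cs ->
  exists s' Cs', Pinv s' Cs' /\ terminal s'.
Proof.
elim: n => [|n IH] s Cs Hs HP;
  (case: (classic (exists u u', [/\ u != u', Free u, Free u', u \in gV s &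
     supp s u = supp s u'])) => [[u [u' [uu' Fu Fu' us Hsu]]]|N];
   [have [s' [c [HP' Hsz]]] := step HP uu' Fu Fu' us Hsu|
    exists s, Cs; split => // u u' uu' Fu Fu' us u's; apply/eqP => Hsu;
    apply: N; exists u, u'; by split]).
  by move: (leq_trans Hsz Hs).
by apply: (IH s' (c :: Cs)) => //; rewrite -ltnS (leq_trans Hsz Hs).
Qed.

Lemma NF x : (x \in VC) || (x \in K) -> ~~ Free x.
Proof. by rewrite /Free negb_and !negbK. Qed.

Lemma main_sec :
  exists (CC : seq {set T}) (Cs : seq (seq T)),
    submultiset CC Ehat /\
    all (is_cycle_in Ehat) Cs /\
    (forall U, U \in EQ e VC -> #|gV CC :&: U| <= NumVer e VC U) /\
    (g_connected CC /\ v_init \in gV CC /\ g_even CC) /\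
    gV CC :&: VC = gV Ehat :&: VC /\
    count (fun c => clength c != 4) Cs <= 2 * #|VC| ^ 2 /\
    (forall c, c \in Cs -> clength c != 4 -> simple_cycle c) /\
    perm_eq (CC ++ flatten (map (@cycle_edges T) Cs)) Ehat.
Proof.
have HP0 : Pinv Ehat [::].
  split => //; first by rewrite /= cats0.
  move=> v; case vE: (v \in gV Ehat); first exact: Ehat_even.
  by rewrite gdeg0 // vE.
have [s [Cs [[Pp Pc Pf Pe] Hterm]]] := iter (leqnn _) HP0.
have sE f : f \in s -> f \in Ehat by move=> fs; rewrite -(perm_mem Pp) mem_cat fs.
have gE x y : gadj s x y -> gadj Ehat x y.
  by case/andP => xy xys; rewrite /gadj xy sE.
have gVs x : x \in gV s -> x \in gV Ehat.
  by rewrite !mem_gV => /hasP[f fs xf]; apply/hasP; exists f => //; apply: sE.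
have cov x y : gadj Ehat x y -> (x \in VC) || (y \in VC).
  by move/gadjE; apply: VC_cover.
have keep x y : (x \in VC) || (x \in K) -> (y \in VC) || (y \in K) ->
    gadj Ehat x y -> gadj s x y.
  move=> hx hy /andP[xy fE]; rewrite /gadj xy -has_pred1 has_count Pf.
    by rewrite -has_count has_pred1.
  by move=> w; rewrite in_set2 => /orP[]/eqP->; apply: NF.
have L2 a b w : a \in VC -> b \in VC -> w \notin VC -> gadj Ehat a w ->
    gadj Ehat w b -> connect (gadj s) a b.
  move=> aV bV wV aw wb; have [k [kK kV ak kb]] := kwP aV bV wV aw wb.
  apply: (connect_trans (y := k)); apply: connect1; apply: keep => //;
    by rewrite ?aV ?bV ?kK ?orbT.
have L3 a : a \in VC -> a \in gV Ehat -> a \in gV s.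
  move=> aV; rewrite mem_gV => /hasP[f fE af].
  have [v [av eav fe]] := incident fE af.
  have gav : gadj Ehat a v by rewrite /gadj av -fe fE.
  case vV: (v \in VC).
    by apply: (@gadj_gV _ _ v); apply: keep; rewrite ?aV ?vV.
  have gva : gadj Ehat v a by rewrite gadj_sym.
  have [k [kK kV ak _]] := kwP aV aV (negbT vV) gav gva.
  by apply: (@gadj_gV _ _ k); apply: keep; rewrite ?aV ?kK ?orbT.
have Ssym := sym_connect_sym (gadj_sym s).
have L4 a : forall p x, (x \in VC -> connect (gadj s) a x) /\
    (x \notin VC -> forall b, gadj Ehat x b -> connect (gadj s) a b) ->
    path (gadj Ehat) x p ->
    (last x p \in VC -> connect (gadj s) a (last x p)).
  elim => [|y p IHp] x [Sx1 Sx2] //= /andP[xy py]; apply: IHp py; split.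
    move=> yV; case xV: (x \in VC).
      by apply: (connect_trans (Sx1 xV)); apply: connect1; apply: keep; rewrite ?xV ?yV.
    by apply: Sx2 => //; rewrite xV.
  move=> yV b yb; have xV : x \in VC by move: (cov _ _ xy); rewrite (negbTE yV) orbF.
  have bV : b \in VC by move: (cov _ _ yb); rewrite (negbTE yV).
  exact: (connect_trans (Sx1 xV) (L2 _ _ _ xV bV yV xy yb)).
have anchor x : x \in gV s -> exists ax, [/\ ax \in VC, ax \in gV Ehat & connect (gadj s) x ax].
  move=> xs; case xV: (x \in VC); first by exists x; split => //; apply: gVs.
  move: (xs); rewrite mem_gV => /hasP[f fs xf].
  have [v [xv exv fe]] := incident (sE f fs) xf.
  have gxv : gadj s x v by rewrite /gadj xv -fe fs.
  exists v; split; last exact: connect1.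
    by move: (VC_cover exv); rewrite xV.
  by apply: gVs; rewrite gadj_sym in gxv; apply: gadj_gV gxv.
exists s, Cs; split; last split; last split; last split; last split; last split;
  last split.
- move=> f; rewrite -((permP Pp) (pred1 f)) count_cat; exact: leq_addr.
- by apply/allP => c /(allP Pc) /andP[].
- move=> U /imsetP[u0 _ ->]; set U0 := eq_class e VC u0.
  have UV w : w \in U0 -> w \notin VC by rewrite inE in_setC => /andP[].
  rewrite /NumVer leq_min; apply/andP; split; first exact/subset_leq_card/subsetIr.
  set A := gV s :&: U0; rewrite -(cardsID K A) addnC; apply: leq_add; last first.
    exact: leq_trans (subset_leq_card (subsetIr A K)) card_K.
  have inj : {in A :\: K &, injective (supp s)}.
    move=> u u'; rewrite !in_setD !in_setI => /andP[uK /andP[us uU]] /andP[u'K /andP[u's u'U]] H.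
    apply/eqP; apply/negPn/negP => uu'.
    by move: (Hterm u u' uu'); rewrite /Free UV // uK UV // u'K us u's H eqxx => /(_ isT isT isT isT).
  rewrite -(card_in_imset inj) -card_powerset; apply: subset_leq_card.
  apply/subsetP => S /imsetP[u]; rewrite in_setD in_setI => /andP[_ /andP[_ uU]] ->.
  rewrite powersetE; apply/subsetP => v; rewrite inE => /gE/gadjE euv.
  have := VC_cover euv; rewrite (negbTE (UV u uU)) /= => vV.
  by rewrite inE vV; apply/existsP; exists u; rewrite uU.
- split; last split.
  + move=> x y xs ys.
    have [ax [axV axE xax]] := anchor x xs.
    have [ay [ayV ayE yay]] := anchor y ys.
    apply: (connect_trans xax); rewrite Ssym; apply: (connect_trans yay); rewrite Ssym.
    have /connectP[p pp lp] := Ehat_conn axE ayE.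
    rewrite lp; apply: (L4 ax p ax) => //; last by rewrite -lp.
    by split => //; rewrite axV.
  + exact: L3.
  + by move=> v _; apply: Pe.
- apply/setP => x; rewrite !inE; case xV: (x \in VC); rewrite ?andbT ?andbF //.
  by apply/idP/idP; [apply: gVs | apply: L3].
- have -> : count (fun c => clength c != 4) Cs = 0.
    by elim: Cs Pc {Pp Hterm} => //= c Cs' IH /andP[/andP[_ /eqP ->] /IH ->].
  by [].
- move=> c cC; have /andP[_ /eqP ->] := allP Pc c cC; by [].
- exact: Pp.
Qed.

End Proof.

Theorem mainTheorem9 (T : finType) (e : rel T)
  (e_sym : symmetric e) (e_irr : irreflexive e)
  (G_conn : graph_connected e)
  (v_init : T) (VC : {set T})
  (VC_cover : vertex_cover e VC) (v_init_VC : v_init \in VC)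
  (Ehat : seq {set T})
  (Ehat_edges : all (edge_of e) Ehat)
  (Ehat_conn : g_connected Ehat)
  (v_init_Ehat : v_init \in gV Ehat)
  (Ehat_even : g_even Ehat)
  (Ehat_twice : forall f : {set T}, count_mem f Ehat <= 2) :
  exists (CC : seq {set T}) (Cs : seq (seq T)),
    submultiset CC Ehat /\
    all (is_cycle_in Ehat) Cs /\
    (forall U, U \in EQ e VC -> #|gV CC :&: U| <= NumVer e VC U) /\
    (g_connected CC /\ v_init \in gV CC /\ g_even CC) /\
    gV CC :&: VC = gV Ehat :&: VC /\
    count (fun c => clength c != 4) Cs <= 2 * #|VC| ^ 2 /\
    (forall c, c \in Cs -> clength c != 4 -> simple_cycle c) /\
    perm_eq (CC ++ flatten (map (@cycle_edges T) Cs)) Ehat.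
Proof.
eapply main_sec; eassumption.
Qed.
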